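(* Let $p$ be a prime, $k\ge 1$, $q=p^k$, and $n\ge 1$. Then for every integer $i$ with $1\le i\le kn$, we have $p^{kn-i}\in\sigma\big(\mathrm{AGL}(n,q)\big)$.
   Context: For a finite group $G$ and a subgroup $H\le G$, a subset $\mathcal F\subseteq G$ is called $H$-intersecting if for all $g,g'\in\mathcal F$ there is $x\in G$ with $gxH=g'xH$ (equivalently $x^{-1}g'^{-1}gx\in H$). The intersection density is $\rho(G,H)=\max\{|\mathcal F|/|H| : \mathcal F\subseteq G \text{ is } H\text{-intersecting}\}$, and the intersection spectrum of $G$ is $\sigma(G)=\{\rho(G,H): H\le G\}$. $\mathrm{AGL}(n,q)$ is the group of affine maps $v\mapsto Av+b$ of $\mathbb F_q^n$ with $A\in\mathrm{GL}(n,q)$, $b\in\mathbb F_q^n$, written as pairs $(A,b)$ with product $(A,b)(A',b')=(AA',Ab'+b)$. *)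

(* Defs.v *)
From mathcomp Require Import all_boot all_order all_algebra all_fingroup.
Set Implicit Arguments. Unset Strict Implicit. Unset Printing Implicit Defensive.
Import GRing.Theory.

Local Open Scope group_scope.

Definition intersectingb (gT : finGroupType) (G H Fs : {set gT}) : bool :=
  [forall g in Fs, forall g' in Fs, exists x in G, (g * x) *: H == (g' * x) *: H].

Definition max_intersecting (gT : finGroupType) (G H : {set gT}) : nat :=
  (\max_(Fs in powerset G | intersectingb G H Fs) #|Fs|)%N.

Definition int_density (gT : finGroupType) (G H : {set gT}) : rat :=
  ((max_intersecting G H)%:R / (#|H|)%:R)%R.

Definition in_int_spectrum (gT : finGroupType) (G : {set gT}) (r : rat) : Prop :=
  exists H : {group gT}, H \subset G /\ int_density G H = r.

Definition AGL (F : finFieldType) (n : nat) : {set {perm 'cV[F]_n}} :=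
  [set s : {perm 'cV[F]_n} | [exists A : 'M[F]_n, [exists b : 'cV[F]_n,
     (A \in unitmx) && [forall v : 'cV[F]_n, s v == (A *m v + b)%R]]]].

(* Main.v *)
Require Import Defs.
From mathcomp Require Import all_boot all_order all_algebra all_fingroup all_solvable.
Set Implicit Arguments. Unset Strict Implicit. Unset Printing Implicit Defensive.
Import GRing.Theory.
Local Open Scope ring_scope.

Lemma rank1_unit (F : fieldType) (n : nat) (u : 'cV[F]_n) (j : 'I_n) :
  1 + u j 0 != 0 -> (1%:M + u *m 'e_j) \in unitmx.
Proof.
move=> hu.
set w := - (1 + u j 0)^-1 *: u.
have key : forall (a b : 'cV[F]_n), (1%:M + a *m 'e_j) *m (1%:M + b *m 'e_j)
   = 1%:M + (a + b + b j 0 *: a) *m 'e_j.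
  move=> a b.
  rewrite mulmxDl !mulmxDr !mul1mx mulmx1 -mulmxA (mulmxA 'e_j) -rowE.
  rewrite [row j b]mx11_scalar mxE mul_scalar_mx -scalemxAr scalemxAl !mulmxDl.
  by rewrite !addrA (addrAC 1%:M).
suff H :  (1%:M + u *m 'e_j) *m (1%:M + w *m 'e_j) = 1%:M.
  by case: (mulmx1_unit H).
rewrite key; suff -> : u + w + w j 0 *: u = 0 by rewrite mul0mx addr0.
rewrite /w mxE -{1}(scale1r u) -!scalerDl.
apply/eqP; rewrite scaler_eq0; apply/orP; left.
by rewrite mulNr -addrA -opprD -{1}(mulr1 (1 + u j 0)^-1) -mulrDr mulVf // subrr.
Qed.

Lemma trans_same (F : fieldType) (n : nat) (c d : 'cV[F]_n) (j : 'I_n) :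
  d j 0 != 0 -> c j 0 != 0 -> exists2 A : 'M[F]_n, A \in unitmx & A *m d = c.
Proof.
move=> hd hc; set u := (d j 0)^-1 *: (c - d).
exists (1%:M + u *m 'e_j).
  apply: rank1_unit; rewrite /u !mxE.
  rewrite -{1}(mulVf hd) -mulrDr addrCA subrr addr0 mulf_neq0 //.
  by rewrite invr_eq0.
rewrite mulmxDl mul1mx -mulmxA -rowE [row j d]mx11_scalar mxE mul_mx_scalar.
by rewrite /u scalerA mulfV // scale1r addrCA subrr addr0.
Qed.

Lemma nz_entry (F : fieldType) (n : nat) (d : 'cV[F]_n) :
  d != 0 -> exists j : 'I_n, d j 0 != 0.
Proof.
move=> hd; case: (boolP [exists j : 'I_n, d j 0 != 0]) => [/existsP//|].
move=> /existsPn h; case/eqP: hd; apply/matrixP => i k.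
by rewrite (ord1 k) mxE; move: (h i); rewrite negbK => /eqP.
Qed.

Lemma gl_trans (F : fieldType) (n : nat) (c d : 'cV[F]_n) :
  d != 0 -> c != 0 -> exists2 A : 'M[F]_n, A \in unitmx & A *m d = c.
Proof.
move=> /nz_entry [j hj] /nz_entry [j' hj'].
set m : 'cV[F]_n := \col_i (if (i == j) || (i == j') then 1 else 0).
have [A1 uA1 eA1] : exists2 A : 'M[F]_n, A \in unitmx & A *m d = m.
  by apply: trans_same hj _; rewrite mxE eqxx oner_neq0.
have [A2 uA2 eA2] : exists2 A : 'M[F]_n, A \in unitmx & A *m m = c.
  by apply: trans_same hj'; rewrite mxE eqxx orbT oner_neq0.
exists (A2 *m A1); first by rewrite unitmx_mul uA1 uA2.
by rewrite -mulmxA eA1.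
Qed.

Local Open Scope group_scope.

Definition tr (F : finFieldType) (n : nat) (b : 'cV[F]_n) : {perm 'cV[F]_n} :=
  perm (@addIr _ b).

Lemma trE (F : finFieldType) (n : nat) (b v : 'cV[F]_n) : tr b v = (v + b)%R.
Proof. by rewrite permE. Qed.

Lemma trM (F : finFieldType) (n : nat) (a b : 'cV[F]_n) : tr a * tr b = tr (a + b)%R.
Proof. by apply/permP => v; rewrite permM !trE addrA. Qed.

Lemma tr0 (F : finFieldType) (n : nat) : tr (0 : 'cV[F]_n) = 1.
Proof. by apply/permP => v; rewrite trE perm1 addr0. Qed.

Lemma tr_inj (F : finFieldType) (n : nat) : injective (@tr F n).
Proof. by move=> a b /permP /(_ 0%R); rewrite !trE !add0r. Qed.

Definition Tset (F : finFieldType) (n : nat) : {set {perm 'cV[F]_n}} :=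
  [set tr b | b : 'cV[F]_n].

Lemma Tgroup (F : finFieldType) (n : nat) : group_set (Tset F n).
Proof.
apply/group_setP; split; first by apply/imsetP; exists 0%R; rewrite ?tr0.
move=> x y /imsetP [a _ ->] /imsetP [b _ ->].
by rewrite trM; apply/imsetP; exists (a + b)%R.
Qed.

Definition TG (F : finFieldType) (n : nat) := Group (Tgroup F n).

Lemma card_TG (F : finFieldType) (n : nat) : #|TG F n| = (#|F| ^ n)%N.
Proof. rewrite /= card_imset; last by move=> a b; apply: tr_inj.
by rewrite cardT -cardE card_mx muln1. Qed.

Lemma TG_AGL (F : finFieldType) (n : nat) : TG F n \subset AGL F n.
Proof.
apply/subsetP => x /imsetP [b _ ->]; rewrite inE.
apply/existsP; exists 1%:M%R; apply/existsP; exists b.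
by rewrite unitmx1 /=; apply/forallP => v; rewrite trE mul1mx.
Qed.

Lemma conj_T (F : finFieldType) (n : nat) (x y : {perm 'cV[F]_n}) :
  x \in AGL F n -> x^-1 * y * x \in Tset F n -> y \in Tset F n.
Proof.
rewrite inE => /existsP [A /existsP [b /andP [hA /forallP hx]]].
case/imsetP => c _ hz.
have hyx : y * x = x * tr c by rewrite -hz !mulgA mulgV mul1g.
apply/imsetP; exists (invmx A *m c)%R => //.
apply/permP => v; rewrite trE.
have := congr1 (fun s : {perm _} => s v) hyx.
rewrite !permM trE !(eqP (hx _)) => /eqP.
rewrite -addrA (addrC b) addrA (can_eq (addrK b)) => /eqP e.
by rewrite -(mulKmx hA (y v)) e mulmxDr mulKmx.
Qed.

Lemma lin_inj (F : finFieldType) (n : nat) (A : 'M[F]_n) :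
  A \in unitmx -> injective (fun v : 'cV[F]_n => (A *m v)%R).
Proof. by move=> hA u v e; rewrite -(mulKmx hA u) e mulKmx. Qed.

Lemma lower (F : finFieldType) (n : nat) (L : {group {perm 'cV[F]_n}}) (c : 'cV[F]_n) :
  c != 0%R -> tr c \in L -> forall a a' : 'cV[F]_n,
  exists2 x, x \in AGL F n & (tr a * x) *: L == (tr a' * x) *: L.
Proof.
move=> hc hcL a a'; case: (eqVneq a a') => [-> | hne].
  by exists 1; [apply: (subsetP (TG_AGL F n)); exact: group1 | ].
have hd : (a - a')%R != 0%R by rewrite subr_eq0.
have [A hA eA] := gl_trans hd hc.
exists (perm (lin_inj hA)).
  rewrite inE; apply/existsP; exists A; apply/existsP; exists 0%R.
  by rewrite hA /=; apply/forallP => v; rewrite permE addr0.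
have e : tr a * perm (lin_inj hA) = tr a' * perm (lin_inj hA) * tr c.
  apply/permP => v; rewrite !permM !trE !permE -eA -mulmxDr.
  by rewrite [(a - a')%R]addrC addrA addrK.
by apply/eqP/lcoset_eqP; rewrite e mem_lcoset mulKg.
Qed.

Local Close Scope group_scope.
Local Close Scope ring_scope.

Theorem theorem1p2 (p k n : nat) (F : finFieldType) :
  prime p -> (1 <= k)%N -> #|F| = (p ^ k)%N -> (1 <= n)%N ->
  forall i : nat, (1 <= i <= k * n)%N ->
    in_int_spectrum (AGL F n) ((p ^ (k * n - i))%:R : rat).
Proof.
move=> pp k1 cardF n1 i /andP [i1 ikn].
have pT : (p.-group (TG F n))%g.
  by rewrite /pgroup card_TG cardF -expnM pnatX pnat_id.
have [L [sLT _ cL]] := normal_pgroup (r:=i) pT (normal_refl _)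
  ltac:(by rewrite card_TG cardF -expnM pfactorK).
have ntL : L != 1%g :> {set _}.
  apply/eqP => h; have : (1 < p ^ i)%N by rewrite -{1}(expn0 p) ltn_exp2l // prime_gt1.
  by rewrite -cL h cards1.
have [t tL t1] := trivgPn _ ntL.
have /imsetP [c _ tc] := subsetP sLT t tL.
have hc : c != 0%R.
  by move: t1; rewrite tc; apply: contra_neq => ->; exact: tr0.
exists L; split; first exact: subset_trans sLT (TG_AGL F n).
have hmax : max_intersecting (AGL F n) L = #|TG F n|.
  apply/eqP; rewrite eqn_leq; apply/andP; split.
  - apply/bigmax_leqP => Fs /andP [_ hint].
    case: (set_0Vmem Fs) => [-> | [g0 g0F]]; first by rewrite cards0.
    rewrite -(card_lcoset (TG F n) g0); apply: subset_leq_card.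
    apply/subsetP => g gF.
    have/forall_inP/(_ g gF)/forall_inP/(_ g0 g0F)/exists_inP [x xG ex] := hint.
    rewrite mem_lcoset; apply: (conj_T xG).
    have : (g * x)%g \in ((g0 * x) *: L)%g by rewrite -(eqP ex) lcoset_refl.
    rewrite mem_lcoset invMg => /(subsetP sLT).
    by rewrite !mulgA.
  - rewrite /max_intersecting.
    have := @leq_bigmax_cond _ (fun Fs => (Fs \in powerset (AGL F n)) && intersectingb (AGL F n) L Fs) (fun Fs => #|Fs|) (Tset F n).
    apply; rewrite powersetE TG_AGL /=.
    apply/forall_inP => g /imsetP [a _ ->]; apply/forall_inP => g' /imsetP [a' _ ->].
    apply/exists_inP; by apply: lower hc _ a a'; rewrite -tc.
rewrite /int_density hmax card_TG cardF cL -expnM.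
have -> : (p ^ (k * n) = p ^ (k * n - i) * p ^ i)%N by rewrite -expnD subnK.
rewrite natrM mulfK //.
by rewrite Num.Theory.pnatr_eq0 -lt0n expn_gt0 prime_gt0.
Qed.
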